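(* Let $n_1,\dots,n_k$ be nonnegative integers. Then $\mathcal{L}^{(t)}_H\big(\prod_{i=1}^k H^{(t)}_{n_i}(x)\big)$ equals the number of inhomogeneous coverings of $[n_1]\sqcup\dots\sqcup[n_k]$ by $t$-paths, i.e. the number of ways to partition the set $[n_1]\sqcup\dots\sqcup[n_k]$ into blocks of size $t+1$, none contained in a single $[n_i]$, and to choose for each block one of the $(t+1)!/2$ (undirected) Hamiltonian paths on that block.
   Context: Fix an integer $t\ge1$. A $t$-path in $K_n$ is a subgraph isomorphic to a path with $t$ edges. $H^{(t)}_n(x)=\sum_F(-1)^{|F|}x^{\,n-(t+1)|F|}$ over all families $F$ of pairwise vertex-disjoint $t$-paths in $K_n$ ($H^{(t)}_0=1$). Let $\mu^{(t)}_n$ be the number of coverings of all vertices of $K_n$ by pairwise vertex-disjoint $t$-paths ($\mu^{(t)}_0=1$; $\mu^{(t)}_n=0$ if $t+1\nmid n$), and let $\mathcal{L}^{(t)}_H$ be the linear functional with $\mathcal{L}^{(t)}_H(x^n)=\mu^{(t)}_n$. *)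

(* Defs.v *)
From HB Require Import structures.
From mathcomp Require Import all_boot all_order all_algebra.
Set Implicit Arguments. Unset Strict Implicit. Unset Printing Implicit Defensive.
Import GRing.Theory.
Local Open Scope ring_scope.

Section TPaths.
Variable T : finType.

(* A subgraph of the complete graph on vertex type T: (vertex set, edge set),
   edges being 2-element vertex sets. *)
Definition subgraph := ({set T} * {set {set T}})%type.

Definition is_tpath (t : nat) (P : subgraph) : bool :=
  [exists v : (t.+1).-tuple T,
     [&& uniq v,
         P.1 == [set tnth v i | i : 'I_t.+1] &
         P.2 == [set [set tnth v (widen_ord (leqnSn t) i); tnth v (lift ord0 i)]
                   | i : 'I_t]]].

Definition disj_tpath_family (t : nat) (F : {set subgraph}) : bool :=
  [forall P in F, is_tpath t P] &&
  [forall P in F, forall Q in F, (P != Q) ==> [disjoint P.1 & Q.1]].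

Definition tpath_covering (t : nat) (F : {set subgraph}) : bool :=
  disj_tpath_family t F && (\bigcup_(P in F) P.1 == [set: T]).

End TPaths.

Definition Hpoly (t n : nat) : {poly int} :=
  \sum_(F : {set subgraph 'I_n} | disj_tpath_family t F)
     ((-1) ^+ #|F|) *: 'X^(n - t.+1 * #|F|).

Definition mu (t n : nat) : nat :=
  #|[pred F : {set subgraph 'I_n} | tpath_covering t F]|.

Definition LH (t : nat) (p : {poly int}) : int :=
  \sum_(i < size p) p`_i * (mu t i)%:Z.

Definition dunion (ns : seq nat) : finType :=
  {i : 'I_(size ns) & 'I_(nth 0%N ns i)}.

Definition block (ns : seq nat) (i : 'I_(size ns)) : {set dunion ns} :=
  [set v : dunion ns | tag v == i].

Definition inhom_count (t : nat) (ns : seq nat) : nat :=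
  #|[pred F : {set subgraph (dunion ns)} |
      tpath_covering t F &&
      [forall P in F, ~~ [exists i, P.1 \subset block i]]]|.

(* Main.v *)
Require Import Defs.
Set Warnings "-notation-overridden,-ambiguous-paths".
From HB Require Import structures.
From mathcomp Require Import all_boot all_order all_algebra.
Set Implicit Arguments. Unset Strict Implicit. Unset Printing Implicit Defensive.
Import GRing.Theory.
Local Open Scope ring_scope.

Section Basics.
Variables (T : finType) (t : nat).
Local Notation sg := (subgraph T).
Definition VV (F : {set sg}) : {set T} := \bigcup_(P in F) P.1.
Definition famb (F : {set sg}) := disj_tpath_family t F.

Lemma tpath_card (P : sg) : is_tpath t P -> #|P.1| = t.+1.
Proof.
case/existsP=> v /and3P[uv /eqP-> _].
rewrite card_imset ?card_ord //; exact/tuple_uniqP.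
Qed.

Lemma tpath_n0 (P : sg) : is_tpath t P -> P.1 != set0.
Proof. by move/tpath_card=> h; apply/eqP=> e; move: h; rewrite e cards0. Qed.

Lemma famP (F : {set sg}) : reflect ({in F, forall P, is_tpath t P} /\
   {in F &, forall P Q : sg, P != Q -> [disjoint P.1 & Q.1]}) (famb F).
Proof.
apply: (iffP andP) => [[/forall_inP h1 /forall_inP h2]|[h1 h2]].
  split=> // P Q PF QF; move: (h2 P PF) => /forall_inP/(_ Q QF)/implyP; exact.
split; apply/forall_inP => // P PF; apply/forall_inP=> Q QF; apply/implyP; exact: h2.
Qed.

Lemma fam_sub (F G : {set sg}) : F \subset G -> famb G -> famb F.
Proof.
move/subsetP=> sFG /famP[h1 h2]; apply/famP; split.
  by move=> P /sFG; apply: h1.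
by move=> P Q /sFG PG /sFG QG; apply: h2.
Qed.

Lemma fam_fst_inj (F : {set sg}) : famb F -> {in F &, injective (fun P : sg => P.1)}.
Proof.
move=> /famP[h1 h2] P Q PF QF e; apply/eqP; apply: contraT => nPQ.
move: (h2 P Q PF QF nPQ); rewrite /= e -setI_eq0 setIid.
by rewrite (negbTE (tpath_n0 (h1 Q QF))).
Qed.

Lemma card_VV (F : {set sg}) : famb F -> #|VV F| = (t.+1 * #|F|)%N.
Proof.
move=> fF; have inj := fam_fst_inj fF; case/famP: fF => h1 h2.
pose S := [set P.1 | P in F].
have eqV : VV F = cover S.
  apply/setP=> x; apply/bigcupP/bigcupP => [[P PF xP]|[A /imsetP[P PF ->] xP]].
    by exists P.1 => //; apply: imset_f.
  by exists P.
have tS : trivIset S.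
  apply/trivIsetP=> _ _ /imsetP[P PF ->] /imsetP[Q QF ->] ne.
  apply: h2 => //; by apply: contraNneq ne => ->.
move/eqP: tS; rewrite -eqV => <-; rewrite big_imset //=.
rewrite (eq_bigr (fun _ => t.+1)); last by move=> P PF; apply: tpath_card; apply: h1.
by rewrite sum_nat_const mulnC.
Qed.

End Basics.
Section Transport.
Variables (T U : finType) (t : nat) (f : T -> U).
Hypothesis inj_f : injective f.
Local Notation sgT := (subgraph T).
Local Notation sgU := (subgraph U).

Definition mapsub (P : sgT) : sgU := (f @: P.1, [set f @: e | e : {set T} in P.2]).
Definition mapfam (F : {set sgT}) : {set sgU} := mapsub @: F.

Lemma mapsub_inj : injective mapsub.
Proof.
move=> [A E] [B D] [/(imset_inj inj_f) -> /(imset_inj (imset_inj inj_f)) ->] //.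
Qed.

Lemma mapfam_inj : injective mapfam.
Proof. exact: imset_inj mapsub_inj. Qed.

Lemma card_mapfam (F : {set sgT}) : #|mapfam F| = #|F|.
Proof. exact: card_imset mapsub_inj. Qed.

Lemma tpath_mapsub (P : sgT) : is_tpath t P -> is_tpath t (mapsub P).
Proof.
case/existsP=> v /and3P[uv /eqP e1 /eqP e2]; apply/existsP; exists (map_tuple f v).
rewrite map_inj_uniq // uv /= e1 e2; apply/andP; split; apply/eqP/setP=> y.
  apply/imsetP/imsetP => [[_ /imsetP[i _ ->] ->]|[i _ ->]].
    by exists i => //; rewrite tnth_map.
  by exists (tnth v i); [apply: imset_f | rewrite tnth_map].
apply/imsetP/imsetP => [[_ /imsetP[i _ ->] ->]|[i _ ->]].
  by exists i => //; rewrite imsetU1 imset_set1 !tnth_map.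
exists [set tnth v (widen_ord (leqnSn t) i); tnth v (lift ord0 i)]; first exact: imset_f.
by rewrite imsetU1 imset_set1 !tnth_map.
Qed.

Lemma tpath_unmap (P' : sgU) : is_tpath t P' -> P'.1 \subset f @: setT ->
  exists2 P, is_tpath t P & mapsub P = P'.
Proof.
case/existsP=> v /and3P[uv /eqP e1 /eqP e2] sub.
have vin i : tnth v i \in f @: setT.
  by apply: (subsetP sub); rewrite e1; apply: imset_f.
have [x0 _ _] := imsetP (vin ord0).
pose g y := odflt x0 [pick x | f x == y].
have fg y : y \in f @: setT -> f (g y) = y.
  case/imsetP=> x _ ->; rewrite /g; case: pickP => [z /eqP //|/(_ x)].
  by rewrite eqxx.
pose w := map_tuple g v.
have fw i : f (tnth w i) = tnth v i by rewrite tnth_map fg.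
exists ([set tnth w i | i : 'I_t.+1],
        [set [set tnth w (widen_ord (leqnSn t) i); tnth w (lift ord0 i)] | i : 'I_t]).
  apply/existsP; exists w; rewrite !eqxx !andbT /=.
  rewrite map_inj_in_uniq // => a b /tnthP[i ->] /tnthP[j ->] /(congr1 f).
  by rewrite !fg.
case: P' e1 e2 {sub} => A E /= -> ->; rewrite /mapsub /=; congr (_, _).
  apply/setP=> y; apply/imsetP/imsetP => [[_ /imsetP[i _ ->] ->]|[i _ ->]].
    by exists i => //; rewrite fw.
  by exists (tnth w i); [apply: imset_f | rewrite fw].
apply/setP=> y; apply/imsetP/imsetP => [[_ /imsetP[i _ ->] ->]|[i _ ->]].
  by exists i => //; rewrite imsetU1 imset_set1 !fw.
exists [set tnth w (widen_ord (leqnSn t) i); tnth w (lift ord0 i)]; first exact: imset_f.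
by rewrite imsetU1 imset_set1 !fw.
Qed.

Lemma tpath_mapsubE (P : sgT) : is_tpath t (mapsub P) = is_tpath t P.
Proof.
apply/idP/idP; last exact: tpath_mapsub.
move=> h; have [|Q hQ /mapsub_inj <- //] := tpath_unmap h.
by apply: imsetS; apply/subsetP.
Qed.

Lemma fam_mapE (F : {set sgT}) : famb t (mapfam F) = famb t F.
Proof.
apply/famP/famP => [[h1 h2]|[h1 h2]]; split.
- by move=> P PF; rewrite -tpath_mapsubE; apply: h1; apply: imset_f.
- move=> P Q PF QF nPQ; rewrite -(imset_disjoint (f:=f)) //.
  apply: (h2 (mapsub P) (mapsub Q)); try exact: imset_f.
  by rewrite (inj_eq mapsub_inj).
- by move=> _ /imsetP[P PF ->]; rewrite tpath_mapsubE; apply: h1.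
- move=> _ _ /imsetP[P PF ->] /imsetP[Q QF ->]; rewrite (inj_eq mapsub_inj) => nPQ.
  by rewrite /= (imset_disjoint inj_f); apply: h2.
Qed.

Lemma VV_map (F : {set sgT}) : VV (mapfam F) = f @: VV F.
Proof.
apply/setP=> y; apply/bigcupP/imsetP => [[_ /imsetP[P PF ->] /imsetP[x xP ->]]|[x /bigcupP[P PF xP] ->]].
  by exists x => //; apply/bigcupP; exists P.
by exists (mapsub P); [apply: imset_f | apply: imset_f].
Qed.

Lemma mapfam_img : mapfam @: [set F | famb t F] =
   [set F' | famb t F' && (VV F' \subset f @: setT)].
Proof.
apply/setP=> F'; rewrite inE; apply/imsetP/andP => [[F]|[fF sub]].
  rewrite inE => fF ->; rewrite fam_mapE fF VV_map; split=> //.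
  by apply: imsetS; apply/subsetP.
have inF : {in F', forall P', exists2 P, is_tpath t P & mapsub P = P'}.
  move=> P' P'F; case/famP: fF => h1 _; apply: tpath_unmap; first exact: h1.
  by apply: subset_trans sub; apply/subsetP=> x xP; apply/bigcupP; exists P'.
have eF : mapfam (mapsub @^-1: F') = F'.
  apply/setP=> P'; apply/imsetP/idP => [[P]|P'F]; first by rewrite inE => h ->.
  by have [P _ e] := inF P' P'F; exists P; rewrite // inE e.
by exists (mapsub @^-1: F'); rewrite // inE -fam_mapE eF.
Qed.

End Transport.
Section Main.
Variables (T : finType) (t : nat).
Local Notation sg := (subgraph T).

Definition G (ok : pred sg) (B : {set T}) : {poly int} :=
  \sum_(F : {set sg} | famb t F && [forall P in F, ok P])
     ((-1) ^+ #|F|) *: 'X^(#|B| - t.+1 * #|F|).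

Lemma enum_img (B : {set T}) : (@enum_val T (mem B)) @: setT = B.
Proof.
apply/eqP; rewrite eqEcard card_imset; last exact: enum_val_inj.
rewrite cardsT card_ord leqnn andbT; apply/subsetP=> _ /imsetP[i _ ->].
exact: enum_valP.
Qed.

Lemma G_Hpoly (B : {set T}) : G (fun P => P.1 \subset B) B = Hpoly t #|B|.
Proof.
pose f := @enum_val T (mem B).
have inj : injective f := @enum_val_inj T (mem B).
rewrite /Hpoly.
rewrite (eq_bigl (fun F => F \in [set F | famb t F])); last by move=> F; rewrite inE.
symmetry; transitivity (\sum_(F in [set F | famb t F])
   ((-1 : int) ^+ #|mapfam f F|) *: ('X^(#|B| - t.+1 * #|mapfam f F|) : {poly int})).
  by apply: eq_bigr => F _; rewrite card_mapfam.
rewrite -(big_imset (fun F : {set sg} => ((-1 : int) ^+ #|F|) *: ('X^(#|B| - t.+1 * #|F|) : {poly int}))); last first.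
  by move=> F1 F2 _ _; apply: mapfam_inj.
rewrite mapfam_img // enum_img; symmetry; apply: eq_bigl => F; rewrite inE; congr (_ && _).
by apply/forall_inP/bigcupsP.
Qed.

Lemma mu_cov (B : {set T}) :
  mu t #|B| = #|[set C : {set sg} | famb t C && (VV C == B)]|.
Proof.
pose f := @enum_val T (mem B).
have inj : injective f := @enum_val_inj T (mem B).
rewrite /mu -(card_imset _ (mapfam_inj inj)).
have -> : [set C : {set sg} | famb t C && (VV C == B)] =
   mapfam f @: [set F | tpath_covering t F].
  apply/setP=> C; rewrite inE; apply/andP/imsetP => [[fC /eqP VC]|[F]].
    have : C \in mapfam f @: [set F | famb t F].
      by rewrite mapfam_img // inE fC VC enum_img subxx.
    case/imsetP=> F; rewrite inE => fF eC; exists F => //.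
    rewrite inE; apply/andP; split=> //; apply/eqP.
    apply: (imset_inj inj); rewrite -VV_map -eC VC.
    by rewrite -[LHS]enum_img.
  rewrite inE => /andP[fF /eqP VF] ->; split; first by rewrite fam_mapE.
  by rewrite VV_map; move: VF; rewrite -/(VV F) => ->; rewrite enum_img.
apply: eq_card => F; apply/imsetP/imsetP => -[x xin ->]; exists x => //; by rewrite ?inE in xin *.
Qed.

End Main.
Section Mul.
Variables (T : finType) (t : nat).
Local Notation sg := (subgraph T).

Lemma fam_in_VV (F : {set sg}) P : P \in F -> P.1 \subset VV F.
Proof. by move=> PF; apply/subsetP=> x xP; apply/bigcupP; exists P. Qed.

Lemma famU (F1 F2 : {set sg}) : famb t F1 -> famb t F2 ->
  (forall P Q, P \in F1 -> Q \in F2 -> [disjoint P.1 & Q.1]) -> famb t (F1 :|: F2).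
Proof.
move=> /famP[a1 b1] /famP[a2 b2] d; apply/famP; split.
  by move=> P /setUP[]; [apply: a1 | apply: a2].
move=> P Q /setUP[PF|PF] /setUP[QF|QF] ne.
- exact: b1.
- exact: d.
- by rewrite disjoint_sym; apply: d.
- exact: b2.
Qed.

Lemma fam_disj (F1 F2 : {set sg}) : famb t F2 -> [disjoint VV F1 & VV F2] ->
  [disjoint F1 & F2].
Proof.
move=> /famP[a2 _] d; apply/pred0P=> P /=; apply/negbTE; apply/andP=> -[P1 P2].
have := tpath_n0 (a2 P P2); apply/negP; rewrite negbK -subset0.
have := disjointW (fam_in_VV P1) (fam_in_VV P2) d.
by rewrite -setI_eq0 setIid => /eqP ->.
Qed.

Lemma eq_G (ok ok' : pred sg) B : ok =1 ok' -> G t ok B = G t ok' B.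
Proof.
move=> e; apply: eq_bigl => F; congr (_ && _).
by apply/forall_inP/forall_inP => h P PF; [rewrite -e | rewrite e]; apply: h.
Qed.

Lemma G_nil : G t (fun _ : sg => false) set0 = 1.
Proof.
rewrite /G (big_pred1 set0); first by rewrite !cards0 expr0 scale1r muln0 sub0n expr0.
move=> F /=; apply/andP/eqP => [[_ /forall_inP h]|->].
  by apply/setP=> P; rewrite inE; apply/negbTE/negP => /h.
split; last by apply/forall_inP => P; rewrite inE.
by apply/famP; split=> P; rewrite inE.
Qed.

Lemma G_mul (ok1 ok2 : pred sg) (B1 B2 : {set T}) : [disjoint B1 & B2] ->
  (forall P, ok1 P -> P.1 \subset B1) -> (forall P, ok2 P -> P.1 \subset B2) ->
  G t ok1 B1 * G t ok2 B2 = G t (fun P => ok1 P || ok2 P) (B1 :|: B2).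
Proof.
move=> dB s1 s2.
pose c1 (F : {set sg}) := famb t F && [forall P in F, ok1 P].
pose c2 (F : {set sg}) := famb t F && [forall P in F, ok2 P].
have VV1 F : c1 F -> VV F \subset B1.
  by case/andP=> _ /forall_inP h; apply/bigcupsP => P /h; apply: s1.
have VV2 F : c2 F -> VV F \subset B2.
  by case/andP=> _ /forall_inP h; apply/bigcupsP => P /h; apply: s2.
have n1 F : c2 F -> forall P, P \in F -> ~~ ok1 P.
  move=> cF P PF; apply/negP => /s1 sP1.
  case/andP: (cF) => /famP[a _] _; have := tpath_n0 (a P PF); apply/negP; rewrite negbK.
  rewrite -subset0 -(disjoint_setI0 dB) subsetI sP1.
  exact: subset_trans (fam_in_VV PF) (VV2 F cF).
rewrite /G big_distrlr /= pair_big_dep /=.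
pose h (p : {set sg} * {set sg}) := p.1 :|: p.2.
pose h' (F : {set sg}) := ([set P in F | ok1 P], [set P in F | ~~ ok1 P]).
rewrite (reindex_onto h h'); last first.
  move=> F _; apply/setP=> P; rewrite /h /h' /= !inE; by case: (ok1 P); rewrite ?andbT ?andbF ?orbF.
apply: eq_big => [[F1 F2]|[F1 F2] /andP[/= cF1 cF2]]; rewrite /h /h' /=.
  apply/andP/andP => [[cF1 cF2]|[/andP[fU /forall_inP aU] /eqP[e1 e2]]]; last first.
    have sub1 : F1 \subset F1 :|: F2 := subsetUl _ _.
    have sub2 : F2 \subset F1 :|: F2 := subsetUr _ _.
    split; apply/andP; split.
    - exact: fam_sub sub1 fU.
    - by apply/forall_inP => P; rewrite -e1 inE => /andP[].
    - exact: fam_sub sub2 fU.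
    - apply/forall_inP => P; rewrite -e2 inE => /andP[PU /negbTE n].
      by have := aU P PU; rewrite n.
  have d12 : forall P Q, P \in F1 -> Q \in F2 -> [disjoint P.1 & Q.1].
    move=> P Q PF QF; apply: disjointW dB.
      exact: subset_trans (fam_in_VV PF) (VV1 _ cF1).
    exact: subset_trans (fam_in_VV QF) (VV2 _ cF2).
  split.
    apply/andP; split; first by apply: famU; [case/andP: cF1|case/andP: cF2|].
    apply/forall_inP => P /setUP[PF|PF].
      by case/andP: cF1 => _ /forall_inP ->.
    by case/andP: cF2 => _ /forall_inP hh; rewrite hh ?orbT.
  apply/eqP; congr (_, _); apply/setP=> P; rewrite !inE.
    case: (boolP (P \in F1)) => PF /=.
      by case/andP: cF1 => _ /forall_inP ->.
    by case: (boolP (P \in F2)) => // PF2; rewrite (negbTE (n1 _ cF2 _ PF2)).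
  case: (boolP (P \in F2)) => PF2 /=; rewrite ?orbT ?orbF.
    by rewrite (n1 _ cF2 _ PF2).
  by case: (boolP (P \in F1)) => //= PF; case/andP: cF1 => _ /forall_inP ->.
have dF : [disjoint F1 & F2].
  apply: fam_disj; first by case/andP: cF2.
  exact: disjointW (VV1 _ cF1) (VV2 _ cF2) dB.
rewrite /h /= (cardsU F1 F2) (disjoint_setI0 dF) cards0 subn0.
rewrite (cardsU B1 B2) (disjoint_setI0 dB) cards0 subn0.
have l1 : (t.+1 * #|F1| <= #|B1|)%N.
  by rewrite -card_VV; [apply: subset_leq_card; apply: VV1 | case/andP: cF1].
have l2 : (t.+1 * #|F2| <= #|B2|)%N.
  by rewrite -card_VV; [apply: subset_leq_card; apply: VV2 | case/andP: cF2].
rewrite -scalerAl -scalerAr scalerA -exprD -exprD; congr (_ *: 'X^_).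
by rewrite mulnDr subnDA addnBAC // addnBA // subnAC.
Qed.

Lemma G_prod (I : eqType) (r : seq I) (A : I -> {set T}) : uniq r ->
  (forall i j, i \in r -> j \in r -> i != j -> [disjoint A i & A j]) ->
  \prod_(i <- r) G t (fun P => P.1 \subset A i) (A i) =
  G t (fun P => has (fun i => P.1 \subset A i) r) (\bigcup_(i <- r) A i).
Proof.
elim: r => [|i r IH] /=.
  by move=> _ _; rewrite !big_nil -G_nil.
move=> /andP[ir ur] d; rewrite !big_cons IH //; last first.
  by move=> a b ar br; apply: d; rewrite inE ?ar ?br orbT.
rewrite G_mul //.
- rewrite big_seq; apply: (big_ind (fun S : {set T} => [disjoint A i & S])).
  + by rewrite -setI_eq0 setI0.
  + move=> S1 S2 d1 d2; rewrite -setI_eq0 setIUr.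
    by rewrite (disjoint_setI0 d1) (disjoint_setI0 d2) setU0.
  + move=> j jr; apply: d; rewrite ?inE ?eqxx ?jr ?orbT //.
    by apply: contraNneq ir => ->.
- move=> P /hasP[j jr sj]; apply: subset_trans sj _.
  by rewrite (big_rem j) //= subsetUl.
Qed.

End Mul.
Section LHlin.
Variable t : nat.

Lemma LH_ext (p : {poly int}) n : (size p <= n)%N ->
  LH t p = \sum_(i < n) p`_i * (mu t i)%:Z.
Proof.
move=> h; rewrite /LH (big_ord_widen n (fun i => p`_i * (mu t i)%:Z) h) big_mkcond.
apply: eq_bigr => i _; case: ifP => // /negbT; rewrite -leqNgt => h'.
by rewrite nth_default // mul0r.
Qed.

Lemma LH0 : LH t 0 = 0.
Proof. by rewrite /LH size_poly0 big_ord0. Qed.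

Lemma LHD p q : LH t (p + q) = LH t p + LH t q.
Proof.
pose n := maxn (size p) (size q).
rewrite !(@LH_ext _ n) ?leq_maxl ?leq_maxr ?size_polyD // -big_split /=.
by apply: eq_bigr => i _; rewrite coefD mulrDl.
Qed.

Lemma LHZX (c : int) m : LH t (c *: 'X^m) = c * (mu t m)%:Z.
Proof.
rewrite (@LH_ext _ m.+1); last by rewrite -(size_polyXn int m) size_scale_leq.
rewrite big_ord_recr /= coefZ coefXn eqxx mulr1 big1 ?add0r //.
by move=> i _; rewrite coefZ coefXn (ltn_eqF (ltn_ord i)) mulr0 mul0r.
Qed.

End LHlin.

Lemma altsum (X : finType) (S : {set X}) :
  \sum_(F : {set X} | F \subset S) (-1 : int) ^+ #|F| = (S == set0)%:R.
Proof.
case: (set_0Vmem S) => [->|[x xS]].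
  rewrite eqxx (big_pred1 set0) ?cards0 ?expr0 // => F; by rewrite subset0.
have -> : (S == set0) = false by apply/negbTE/set0Pn; exists x.
pose phi (F : {set X}) := if x \in F then F :\ x else x |: F.
have phiK : involutive phi.
  move=> F; rewrite /phi; case: (boolP (x \in F)) => xF.
    by rewrite !inE eqxx /= setD1K.
  by rewrite setU11 setU1K.
set s := \sum_(F | _) _.
have e : s = - s.
  rewrite {1}/s (reindex_inj (can_inj phiK)) /= -sumrN; apply: eq_big => F.
    rewrite /phi; case: (boolP (x \in F)) => xF.
      apply/idP/idP => h; last by apply: subset_trans h; apply: subD1set.
      by rewrite -(setD1K xF); apply/subsetP => y /setU1P[->//|]; apply/subsetP.
    apply/idP/idP => h; first by apply: subset_trans h; apply: subsetUr.
    by apply/subsetP => y /setU1P[->//|]; apply/subsetP.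
  move=> _; rewrite /phi; case: (boolP (x \in F)) => xF.
    by rewrite [#|F|](cardsD1 x) xF add1n exprS mulN1r opprK.
  by rewrite cardsU1 xF add1n exprS mulN1r.
have : s *+ 2 = 0 by rewrite mulr2n {1}e addNr.
by move/eqP; rewrite Num.Theory.mulrn_eq0 /= => /eqP.
Qed.
Section Final.
Variables (T : finType) (t : nat).
Local Notation sg := (subgraph T).

Lemma K1 (F : {set sg}) : famb t F ->
  #|[set G | famb t G && (VV G == ~: VV F)]| =
  #|[set C | famb t C && (VV C == setT) && (F \subset C)]|.
Proof.
move=> fF.
have dFG G : famb t G -> VV G = ~: VV F -> [disjoint F & G].
  by move=> fG VG; apply: fam_disj fG _; rewrite VG -setI_eq0 setICr.
rewrite -(@card_in_imset _ _ (fun G => F :|: G)); last first.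
  move=> G1 G2; rewrite !inE => /andP[f1 /eqP V1] /andP[f2 /eqP V2] e.
  have d1 := dFG _ f1 V1; have d2 := dFG _ f2 V2.
  apply/setP=> P; move/setP/(_ P): e; rewrite !inE.
  case: (boolP (P \in F)) => //= PF.
  by rewrite (disjointFr d1 PF) (disjointFr d2 PF).
congr #|pred_of_set _|; apply/setP=> C; rewrite inE.
apply/imsetP/idP => [[G]|/andP[/andP[fC /eqP VC] sFC]].
  rewrite inE => /andP[fG /eqP VG] ->; rewrite subsetUl andbT.
  apply/andP; split.
    apply: famU => // P Q PF QG; apply: disjointW (fam_in_VV PF) (fam_in_VV QG) _.
    by rewrite VG -setI_eq0 setICr.
  by rewrite /VV bigcup_setU -/(VV F) -/(VV G) VG setUCr.
exists (C :\: F); last by apply/setP => P; rewrite !inE; case: (boolP (P \in F)) => //= PF; rewrite (subsetP sFC P PF).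
rewrite inE; apply/andP; split; first exact: fam_sub (subsetDl _ _) fC.
case/famP: (fC) => _ dC.
apply/eqP/setP => x; rewrite inE; apply/bigcupP/idP => [[P /setDP[PC PF] xP]|xF].
  apply/bigcupP => -[Q QF xQ].
  have ne : P != Q by apply: contraNneq PF => ->.
  have := dC P Q PC (subsetP sFC Q QF) ne; rewrite -setI_eq0.
  by move/eqP/setP/(_ x); rewrite !inE xP xQ.
have : x \in VV C by rewrite VC inE.
case/bigcupP => P PC xP; exists P => //; rewrite inE PC andbT.
by apply: contraNN xF => PF; apply/bigcupP; exists P.
Qed.

Lemma Final (hom : pred sg) :
  LH t (G t hom setT) = (#|[set C : {set sg} | famb t C && (VV C == setT) &&
                              [forall P in C, ~~ hom P]]|)%:Z.
Proof.
rewrite /G (big_morph (LH t) (LHD t) (LH0 t)).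
pose cov (C : {set sg}) := famb t C && (VV C == setT).
transitivity (\sum_(F : {set sg} | famb t F && [forall P in F, hom P])
   \sum_(C in [set C | cov C && (F \subset C)]) (-1 : int) ^+ #|F|).
  apply: eq_bigr => F /andP[fF _]; rewrite LHZX sumr_const -mulr_natr natz.
  congr (_ * Posz _).
  have -> : (#|[set: T]| - t.+1 * #|F| = #|~: VV F|)%N.
    by rewrite cardsT -(card_VV fF) -(cardsC (VV F)) addKn.
  rewrite mu_cov K1 //; apply: eq_card => C; by rewrite !inE.
rewrite (exchange_big_dep cov) /=; last by move=> F C _; rewrite inE => /andP[].
pose S1 := [set C : {set sg} | cov C && [forall P in C, ~~ hom P]].
pose S2 := [set C : {set sg} | cov C && ~~ [forall P in C, ~~ hom P]].
rewrite (eq_bigl (fun C => (C \in S1) || (C \in S2))); last first.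
  by move=> C; rewrite !inE; case: (cov C); case: [forall P in C, ~~ hom P].
rewrite bigU /=; last first.
  by apply/pred0P=> C /=; rewrite !inE; case: (cov C); case: [forall P in C, ~~ hom P].
rewrite addrC big1 ?add0r; last first.
  move=> C; rewrite inE => /andP[cC nh].
  rewrite (eq_bigl (fun F : {set sg} => F \subset [set P in C | hom P])); last first.
    move=> F; rewrite inE cC /=; apply/andP/idP => [[/andP[_ /forall_inP hF] sFC]|sFH].
      by apply/subsetP => P PF; rewrite inE (subsetP sFC P PF) hF.
    have sFC : F \subset C by apply: subset_trans sFH _; apply/subsetP=> P; rewrite inE => /andP[].
    split=> //; apply/andP; split; first exact: fam_sub sFC (proj1 (andP cC)).
    by apply/forall_inP => P /(subsetP sFH); rewrite inE => /andP[].
  rewrite altsum; case: eqP => // e; case/negP: nh; apply/forall_inP => P PC.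
  apply/negP => hP; have : P \in [set P in C | hom P] by rewrite inE PC hP.
  by rewrite e inE.
rewrite (eq_bigr (fun _ => 1)); last first.
  move=> C; rewrite inE => /andP[cC nh].
  rewrite (eq_bigl (fun F : {set sg} => F \subset [set P in C | hom P])); last first.
    move=> F; rewrite inE cC /=; apply/andP/idP => [[/andP[_ /forall_inP hF] sFC]|sFH].
      by apply/subsetP => P PF; rewrite inE (subsetP sFC P PF) hF.
    have sFC : F \subset C by apply: subset_trans sFH _; apply/subsetP=> P; rewrite inE => /andP[].
    split=> //; apply/andP; split; first exact: fam_sub sFC (proj1 (andP cC)).
    by apply/forall_inP => P /(subsetP sFH); rewrite inE => /andP[].
  rewrite altsum; case: eqP => // /eqP ne; case/set0Pn: ne => P; rewrite inE => /andP[PC hP].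
  by move/forall_inP/(_ P PC): nh; rewrite hP.
by rewrite sumr_const -natz.
Qed.

End Final.
Lemma card_block (ns : seq nat) (i : 'I_(size ns)) : #|block i| = nth 0%N ns i.
Proof.
pose T_ := fun j : 'I_(size ns) => 'I_(nth 0%N ns j).
have -> : block i = [set (Tagged T_ x : dunion ns) | x : 'I_(nth 0%N ns i)].
  apply/setP => -[j x]; rewrite !inE /=; apply/eqP/imsetP => [e|[y _ e]].
    move: x; rewrite e => x; by exists x.
  by move: (congr1 tag e).
rewrite card_imset ?cardsT ?card_ord //.
by move=> x y e; apply: (eq_from_Tagged e).
Qed.

Theorem mainTheorem12 (t : nat) (ns : seq nat) (ht : (0 < t)%N) :
  LH t (\prod_(m <- ns) Hpoly t m) = (inhom_count t ns)%:Z.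
Proof.
pose T := dunion ns.
rewrite (big_nth 0%N) big_mkord.
rewrite (eq_bigr (fun i => G t (fun P : subgraph T => P.1 \subset block i) (block i)));
  last by move=> i _; rewrite G_Hpoly card_block.
rewrite (@G_prod _ t _ (index_enum 'I_(size ns)) (@block ns)); last first.
- move=> i j _ _ ne; rewrite -setI_eq0; apply/eqP/setP => v; rewrite !inE.
  by apply/negP => /andP[/eqP -> /eqP e]; rewrite e eqxx in ne.
- exact: index_enum_uniq.
have -> : \bigcup_(i <- index_enum 'I_(size ns)) block i = setT.
  apply/setP => v; rewrite inE; apply/bigcupP; exists (tag v) => //.
  by rewrite inE.
rewrite (@eq_G _ t _ (fun P : subgraph T => [exists i, P.1 \subset block i])); last first.
  move=> P; apply/hasP/existsP => [[i _ h]|[i h]]; first by exists i.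
  by exists i => //; apply: mem_index_enum.
rewrite Final /inhom_count; congr Posz; apply: eq_card => C; rewrite !inE.
by [].
Qed.
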